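(* Let $r\in\mathbb{Z}$ and let $P_{n,k}(r)=[x^n]\,\frac{1+rx^2}{1+x^2}\left(\frac{x}{1+x^2}\right)^k$ for $n,k\ge 0$. Then for all $n\ge 0$, $$P_{2n,n}(r)=0^n-(r-3)(-1)^{\frac{n}{2}}\binom{\frac{3n}{2}-1}{\frac{n}{2}-1}\frac{1+(-1)^n}{2},$$ and alternatively $$P_{2n,n}(r)=(r-2)\,0^n -(r-3)(-1)^{\frac{n}{2}}\binom{\frac{3n}{2}-1}{n}\frac{1+(-1)^n}{2},$$ where the terms carrying the factor $\frac{1+(-1)^n}{2}$ are interpreted as $0$ when $n$ is odd.
   Context: $[x^n]h(x)$ denotes the coefficient of $x^n$ in $h(x)$. $0^m$ equals $1$ if $m=0$ and $0$ otherwise. For integers $a$ and $k$, $\binom{a}{k}=\frac{a(a-1)\cdots(a-k+1)}{k!}$ if $k\ge 0$ and $\binom{a}{k}=0$ if $k<0$ (so $\binom{-1}{-1}=0$, $\binom{-1}{0}=1$). The $P_{n,k}(r)$ form the coefficient array of the restricted Chebyshev–Boubaker polynomials $P_n(x;r)=\sum_k P_{n,k}(r)x^k$. *)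

(* Defs.v *)
From mathcomp Require Import all_boot all_order all_algebra.
Set Implicit Arguments. Unset Strict Implicit. Unset Printing Implicit Defensive.
Import Order.TTheory GRing.Theory Num.Theory.
Local Open Scope ring_scope.

(* Formal power series over int, represented by their coefficient sequence:
   fps_coef-wise, h n = [x^n] h. *)
Definition fps := nat -> int.

Definition fps_cst (c : int) : fps := fun n => if n == 0%N then c else 0.
Definition fps_X : fps := fun n => if n == 1%N then 1 else 0.
Definition fps_add (f g : fps) : fps := fun n => f n + g n.
Definition fps_sub (f g : fps) : fps := fun n => f n - g n.
Definition fps_scale (c : int) (f : fps) : fps := fun n => c * f n.
Definition fps_mul (f g : fps) : fps :=
  fun n => \sum_(i < n.+1) f i * g (n - i)%N.
Definition fps_exp (f : fps) (k : nat) : fps := iter k (fps_mul f) (fps_cst 1).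
(* Multiplicative inverse of a series with constant term 1:
   1/f = sum_j (1 - f)^j, where for the coefficient of x^n only j <= n matter. *)
Definition fps_inv (f : fps) : fps :=
  fun n => \sum_(j < n.+1) fps_exp (fps_sub (fps_cst 1) f) j n.

Definition one_plus_x2 : fps := fps_add (fps_cst 1) (fps_mul fps_X fps_X).
Definition one_plus_rx2 (r : int) : fps :=
  fps_add (fps_cst 1) (fps_scale r (fps_mul fps_X fps_X)).

Definition P (n k : nat) (r : int) : int :=
  fps_mul (fps_mul (one_plus_rx2 r) (fps_inv one_plus_x2))
          (fps_exp (fps_mul fps_X (fps_inv one_plus_x2)) k) n.

Definition gbinom (a k : int) : rat :=
  if k < 0 then 0
  else (\prod_(i < `|k|%N) (a - (i : nat)%:Z)%:~R) / (`|k|%N)`!%:R.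

(* Main.v *)
Require Import Defs.
From mathcomp Require Import all_boot all_order all_algebra.
From mathcomp Require Import zify ring.
From Stdlib Require Import FunctionalExtensionality.
Import Order.TTheory GRing.Theory Num.Theory.
Local Open Scope ring_scope.

Definition mono (c : int) (a : nat) : fps := fun n => if n == a then c else 0.

Lemma mul_mono (c : int) a g n :
  fps_mul (mono c a) g n = if (a <= n)%N then c * g (n - a)%N else 0.
Proof.
rewrite /fps_mul /mono; case: leqP => han.
  rewrite (bigD1 (@Ordinal n.+1 a han)) //= eqxx.
  rewrite big1 ?addr0 // => i /negbTE; rewrite -val_eqE /= => ->; by rewrite mul0r.
rewrite big1 // => i _; case: eqP => [ei|]; last by rewrite mul0r.
by move: (ltn_ord i); rewrite ei ltnS leqNgt han.
Qed.

Definition tp (N : nat) (f : fps) : {poly int} := \poly_(i < N) f i.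
Lemma tpE N f i : (i < N)%N -> (tp N f)`_i = f i.
Proof. by move=> h; rewrite coef_poly h. Qed.

Lemma mulE N f g n : (n < N)%N -> fps_mul f g n = (tp N f * tp N g)`_n.
Proof.
move=> hn; rewrite coefM /fps_mul; apply: eq_bigr => i _.
have hi := ltn_ord i; rewrite !tpE //; lia.
Qed.

Lemma mulE3l N f g h n : (n < N)%N ->
  fps_mul f (fps_mul g h) n = (tp N f * (tp N g * tp N h))`_n.
Proof.
move=> hn; rewrite coefM /fps_mul; apply: eq_bigr => i _.
have hi := ltn_ord i; rewrite tpE; last lia.
congr (_ * _); rewrite coefM; apply: eq_bigr => j _.
have hj := ltn_ord j; rewrite !tpE //; lia.
Qed.

Lemma mulE3r N f g h n : (n < N)%N ->
  fps_mul (fps_mul f g) h n = (tp N f * tp N g * tp N h)`_n.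
Proof.
move=> hn; rewrite [RHS]coefM /fps_mul; apply: eq_bigr => i _.
have hi := ltn_ord i; rewrite [(tp N h)`_ _]tpE; last lia.
congr (_ * _); rewrite coefM; apply: eq_bigr => j _.
have hj := ltn_ord j; rewrite !tpE //; lia.
Qed.

Lemma fmulA f g h : fps_mul f (fps_mul g h) = fps_mul (fps_mul f g) h.
Proof.
apply: functional_extensionality => n.
by rewrite (@mulE3l n.+1) // (@mulE3r n.+1) // mulrA.
Qed.

Lemma fmulC f g : fps_mul f g = fps_mul g f.
Proof.
apply: functional_extensionality => n.
by rewrite (@mulE n.+1) // (@mulE n.+1 g) // mulrC.
Qed.

Lemma fmulDl f g h n : fps_mul (fps_add f g) h n = fps_mul f h n + fps_mul g h n.
Proof.
rewrite /fps_mul /fps_add -big_split; apply: eq_bigr => i _; exact: mulrDl.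
Qed.

Lemma mono_mul c d a b : fps_mul (mono c a) (mono d b) = mono (c * d) (a + b).
Proof.
apply: functional_extensionality => n; rewrite mul_mono /mono.
case: leqP => h; last by case: eqP => //; lia.
case: eqP => e; case: eqP => e' //; lia.
Qed.

Lemma mono_exp c a j : fps_exp (mono c a) j = mono (c ^+ j) (a * j).
Proof.
elim: j => [|j IH]; first by rewrite muln0.
by rewrite /fps_exp iterS -/(fps_exp _ j) IH mono_mul exprS mulnS.
Qed.

Definition Ival : fps := fun n => if odd n then 0 else (-1) ^+ (n./2).

Lemma X2E : fps_mul fps_X fps_X = mono 1 2.
Proof. by rewrite (mono_mul 1 1 1 1) mulr1. Qed.

Lemma inv_E : fps_inv one_plus_x2 = Ival.
Proof.
rewrite /fps_inv.
have -> : fps_sub (fps_cst 1) one_plus_x2 = mono (-1) 2.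
  apply: functional_extensionality => n.
  rewrite /fps_sub /one_plus_x2 /fps_add X2E /fps_cst /mono.
  case: (n =P 0)%N => [->|_] //=.
  by case: (n == 2)%N; rewrite ?add0r ?sub0r ?subr0.
apply: functional_extensionality => n; rewrite /Ival.
under eq_bigr => j _ do rewrite mono_exp /mono.
case: (boolP (odd n)) => ho.
  rewrite big1 // => j _; case: eqP => // e.
  have h2 : odd (2 * j)%N by rewrite -e.
  by rewrite oddM in h2.
have hj : (n./2 < n.+1)%N by rewrite ltnS -divn2 leq_div.
rewrite (bigD1 (@Ordinal n.+1 n./2 hj)) //= big1 ?addr0.
  have -> : (n == 2 * n./2)%N by apply/eqP; rewrite -{1}(odd_double_half n) (negbTE ho) mul2n.
  by [].
move=> i /negbTE; rewrite -val_eqE /= => hi; case: eqP => // e.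
have : (nat_of_ord i == n./2)%N by rewrite [in n./2]e mul2n doubleK.
by rewrite hi.
Qed.

Lemma onex2E : one_plus_x2 = fps_add (mono 1 0) (mono 1 2).
Proof. by rewrite /one_plus_x2 X2E. Qed.

Lemma onex2_inv : fps_mul one_plus_x2 Ival = fps_cst 1.
Proof.
apply: functional_extensionality => m.
rewrite onex2E fmulDl !mul_mono /Ival /fps_cst.
case: m => [|[|m]] //=.
rewrite subn2 /= !mul1r negbK.
by case: (odd m) => //=; rewrite exprS mulN1r addNr.
Qed.

Lemma mul1f g : fps_mul (fps_cst 1) g = g.
Proof.
apply: functional_extensionality => m.
by rewrite (_ : fps_cst 1 = mono 1 0) // mul_mono subn0 mul1r.
Qed.

Lemma G_rec k m : fps_exp Ival k.+1 m +
   (if (2 <= m)%N then fps_exp Ival k.+1 (m - 2)%N else 0) = fps_exp Ival k m.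
Proof.
have E : fps_mul one_plus_x2 (fps_exp Ival k.+1) = fps_exp Ival k.
  by rewrite [fps_exp _ k.+1]/fps_exp iterS -/(fps_exp _ k) fmulA onex2_inv mul1f.
have := f_equal (fun f => f m) E; rewrite /= onex2E fmulDl !mul_mono subn0 !mul1r /=.
by move=> <-; case: ifP.
Qed.

Definition Gc (k m : nat) : int :=
  if odd m then 0 else (-1) ^+ (m./2) * ('C(k + m./2 - 1, m./2))%:Z.

Lemma G_E k m : fps_exp Ival k m = Gc k m.
Proof.
elim: k m => [|k IH] m.
  rewrite /fps_exp /= /fps_cst /Gc.
  case: eqP => [->|hm] //.
  case: ifP => ho //.
  have h : (0 < m./2)%N.
    have := odd_double_half m; rewrite ho add0n => E.
    by move: hm; rewrite -E; case: (m./2).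
  rewrite add0n bin_small ?mulr0 //; lia.
elim/ltn_ind: m => m IHm.
have R := G_rec k m; rewrite IH in R.
case: (leqP 2 m) => hm; last first.
  move: R; rewrite /Gc; case: m hm {IHm} => [|[|m]] //= _; rewrite addr0 => ->;
  by rewrite ?addn0 ?bin0.
have h2 : (m - 2 < m)%N by lia.
rewrite hm (IHm _ h2) in R.
have -> : fps_exp Ival k.+1 m = Gc k m - Gc k.+1 (m - 2) by rewrite -R addrK.
rewrite /Gc; case: m hm {R IHm h2} => [|[|m]] //= _.
rewrite subn2 /= negbK; case: (odd m) => /=; first by rewrite subr0.
set j := m./2.
have -> : (k + j.+1 - 1 = k + j)%N by lia.
have -> : (k.+1 + j - 1 = k + j)%N by lia.
have -> : (k.+1 + j.+1 - 1 = (k + j).+1)%N by lia.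
rewrite binS PoszD exprS; ring.
Qed.

Lemma rx2E r : one_plus_rx2 r = fps_add (mono 1 0) (mono r 2).
Proof.
apply: functional_extensionality => m.
rewrite /one_plus_rx2 /fps_add /fps_scale X2E /mono.
by case: (m == 2)%N; rewrite ?mulr1 ?mulr0.
Qed.

Lemma expXE g k : fps_exp (fps_mul fps_X g) k = fps_mul (mono 1 k) (fps_exp g k).
Proof.
elim: k => [|k IH]; first by rewrite (_ : mono 1 0 = fps_cst 1) // mul1f.
rewrite [LHS]/fps_exp iterS -/(fps_exp _ k) IH [fps_exp g k.+1]/fps_exp iterS -/(fps_exp _ k).
rewrite (_ : mono 1 k.+1 = fps_mul fps_X (mono 1 k)); last by rewrite (mono_mul 1 1 1 k) mulr1.
by rewrite -!fmulA; congr (fps_mul fps_X _); rewrite !fmulA (fmulC g).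
Qed.

Lemma P_E n r : P (2 * n) n r = Gc n.+1 n +
  (if (2 <= 2 * n)%N then r * (if (n <= 2 * n - 2)%N then Gc n.+1 (2 * n - 2 - n) else 0) else 0).
Proof.
rewrite /P inv_E rx2E expXE.
rewrite -fmulA (fmulA Ival) (fmulC Ival) -(fmulA (mono 1 n)).
rewrite (_ : fps_mul Ival (fps_exp Ival n) = fps_exp Ival n.+1) //.
rewrite fmulDl !mul_mono !G_E mul1r.
have h : (n <= 2 * n)%N by rewrite mul2n -addnn leq_addr.
rewrite !subn0 h !mul1r (_ : (2 * n - n = n)%N) //.
by rewrite mul2n -addnn addnK.
Qed.

Lemma GcE k j : Gc k (2 * j) = (-1) ^+ j * ('C(k + j - 1, j))%:Z.
Proof. by rewrite /Gc oddM /= mul2n doubleK. Qed.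

Lemma gbinomE (a k : nat) : (k <= a)%N -> gbinom a%:Z k%:Z = ('C(a, k))%:R.
Proof.
move=> hk; rewrite /gbinom /=.
rewrite (eq_bigr (fun i : 'I_k => ((a - i)%N)%:R)); last first.
  move=> i _; have hi := ltn_ord i; rewrite subzn //; lia.
rewrite -natr_prod -ffact_prod -bin_ffact natrM mulfK //.
by rewrite pnatr_eq0 -lt0n fact_gt0.
Qed.

Lemma bin3 p : 'C(3 * p + 3, p.+1) = (3 * 'C(3 * p + 2, p))%N.
Proof.
have := mul_bin_diag (3 * p + 3) p.
rewrite (_ : (3 * p + 3).-1 = 3 * p + 2)%N; last by lia.
rewrite (_ : (3 * p + 3 = 3 * p.+1)%N); last by lia.
by rewrite -mulnA mulnCA => /eqP; rewrite eqn_pmul2l // => /eqP <-.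
Qed.

Theorem mainTheorem3 (r : int) (n : nat) :
  ((P (2 * n) n r)%:~R : rat) =
    (0 : rat) ^+ n
    - (r - 3)%:~R * (-1) ^+ (n./2)
        * gbinom ((3 * n)./2%:Z - 1) ((n./2)%:Z - 1)
        * ((1 + (-1) ^+ n) / 2)
  /\
  ((P (2 * n) n r)%:~R : rat) =
    (r - 2)%:~R * (0 : rat) ^+ n
    - (r - 3)%:~R * (-1) ^+ (n./2)
        * gbinom ((3 * n)./2%:Z - 1) (n%:Z)
        * ((1 + (-1) ^+ n) / 2).
Proof.
have [m [-> | ->]] : exists m, n = (2 * m)%N \/ n = (2 * m).+1.
  exists n./2; rewrite mul2n; case: (boolP (odd n)) => ho.
    by right; rewrite -{1}(odd_double_half n) ho.
  by left; rewrite -{1}(odd_double_half n) (negbTE ho).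
- case: m => [|p].
    have hP : P (2 * (2 * 0)) (2 * 0) r = 1 by rewrite P_E.
    rewrite hP /gbinom /= big_ord0 !muln0 !expr0 fact0.
    by split; field.
  have hP : P (2 * (2 * p.+1)) (2 * p.+1) r =
      (-1) ^+ p.+1 * ('C(3 * p + 3, p.+1))%:Z + r * ((-1) ^+ p * ('C(3 * p + 2, p))%:Z).
    rewrite P_E ifT; last by lia.
    rewrite ifT; last by lia.
    rewrite (_ : (2 * (2 * p.+1) - 2 - 2 * p.+1 = 2 * p)%N); last by lia.
    rewrite !GcE.
    rewrite (_ : ((2 * p.+1).+1 + p.+1 - 1 = 3 * p + 3)%N); last by lia.
    by rewrite (_ : ((2 * p.+1).+1 + p - 1 = 3 * p + 2)%N); last by lia.
  rewrite hP (_ : (3 * (2 * p.+1) = 2 * (3 * p + 3))%N); last by lia.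
  rewrite !mul2n !doubleK.
  rewrite (_ : ((3 * p + 3)%N%:Z - 1 = (3 * p + 2)%N%:Z)); last by lia.
  rewrite (_ : ((p.+1)%:Z - 1 = p%:Z)); last by lia.
  rewrite !gbinomE; [|lia|lia].
  rewrite bin3 -(bin_sub (n:=(3 * p + 2)%N) (m := p.+1.*2)); last by lia.
  rewrite (_ : (3 * p + 2 - p.+1.*2 = p)%N); last by lia.
  have hs : ((-1) ^+ p.+1.*2 : rat) = 1 by rewrite -signr_odd odd_double.
  have h0 : (0 : rat) ^+ p.+1.*2 = 0 by rewrite expr0n.
  rewrite hs h0 !(rmorphD, rmorphM, rmorphXn, rmorphN, rmorph1, rmorphB) /=.
  rewrite !exprS; set s := (-1) ^+ p.
  set c := 'C(3 * p + 2, p).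
  rewrite (_ : ((Posz c)%:~R : rat) = c%:R) // (_ : ((Posz 0)%:~R : rat) = 0) //.
  by split; field.
- have hP : P (2 * (2 * m).+1) (2 * m).+1 r = 0.
    rewrite P_E /Gc /= oddM /= add0r.
    case: ifP => // _; case: ifP => [h|_]; last by rewrite mulr0.
    case: m h => [|m] //= _.
    rewrite (_ : (2 * (2 * m.+1).+1 - 2 - (2 * m.+1).+1 = (2 * m).+1)%N); last by lia.
    by rewrite /= oddM /= mulr0.
  have hs : (1 + (-1) ^+ (2 * m).+1 : rat) = 0.
    by rewrite -signr_odd /= oddM /= expr1 addrN.
  by rewrite hP hs !mulr0 subr0 exprS mul0r mulr0.
Qed.
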